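(* Let $(Q,\cdot)$ be a quasigroup satisfying $(xx)(yz)=(x(xy))z$ for all $x,y,z\in Q$ (an LC1-quasigroup). Then $Q$ satisfies $x(x(yz))=((xx)y)z$ for all $x,y,z\in Q$ (i.e. $Q$ is an LC3-quasigroup).
   Context: A quasigroup is a set $Q$ with a binary operation $\cdot$ (written as juxtaposition) such that for all $a,b\in Q$ each of the equations $ax=b$ and $ya=b$ has a unique solution in $Q$. *)

(* Defs.v *)
Definition is_quasigroup {Q : Type} (mul : Q -> Q -> Q) : Prop :=
  forall a b : Q,
    (exists x, mul a x = b /\ forall x', mul a x' = b -> x' = x) /\
    (exists y, mul y a = b /\ forall y', mul y' a = b -> y' = y).

Definition LC1 {Q : Type} (mul : Q -> Q -> Q) : Prop :=
  forall x y z : Q, mul (mul x x) (mul y z) = mul (mul x (mul x y)) z.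

Definition LC3 {Q : Type} (mul : Q -> Q -> Q) : Prop :=
  forall x y z : Q, mul x (mul x (mul y z)) = mul (mul (mul x x) y) z.

(* Main.v *)
Require Import Defs.

Theorem mainTheorem6 (Q : Type) (mul : Q -> Q -> Q) :
  is_quasigroup mul -> LC1 mul -> LC3 mul.
Proof.
  intros Hq H1.
  assert (Hlc : forall a u v, mul a u = mul a v -> u = v).
  { intros a u v Huv. destruct (Hq a (mul a v)) as [[w [_ Hw]] _].
    rewrite (Hw u Huv), (Hw v eq_refl). reflexivity. }
  assert (Hrc : forall a u v, mul u a = mul v a -> u = v).
  { intros a u v Huv. destruct (Hq a (mul v a)) as [_ [w [_ Hw]]].
    rewrite (Hw u Huv), (Hw v eq_refl). reflexivity. }
  assert (Hleft : forall w f, mul w f = w -> forall z, mul f z = z).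
  { intros w f Hf z. apply (Hlc (mul w w)).
    rewrite (H1 w f z), Hf. reflexivity. }
  assert (Hid : forall w x f, mul x f = x -> mul w f = w).
  { intros w x f Hf. destruct (Hq w w) as [[g [Hg _]] _].
    assert (f = g).
    { apply (Hrc g). rewrite (Hleft w g Hg g). apply (Hleft x f Hf). }
    subst. exact Hg. }
  assert (Hla : forall x y, mul (mul x x) y = mul x (mul x y)).
  { intros x y. destruct (Hq x x) as [[f [Hf _]] _].
    rewrite <- (Hid (mul x (mul x y)) x f Hf), <- (H1 x y f), (Hid y x f Hf).
    reflexivity. }
  intros x y z. rewrite <- Hla, H1, Hla. reflexivity.
Qed.
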